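(* Let $x\in\mathbb X$, $B\Subset\mathbb X\setminus\{x\}$ and $Y\in\mathbf F(x)$ with $Y\cap B=\varnothing$. Then \[ \max\Big\{|W(Y\mid B)|,\ 1+|W(Y\mid B)-1|\alpha^S\ \Big|\ \varnothing\neq S\subset Y\setminus\{x\}\Big\} \le\prod_{\substack{X\in\mathbf F(x):\\ X\setminus B=Y}}\max\Big\{|W(X)|,\ 1+|W(X)-1|\alpha^S\ \Big|\ \varnothing\neq S\subset X\setminus(\{x\}\cup B)\Big\}. \]
   Context: $\mathbb X$ is a finite or countably infinite set; $X\Subset\mathbb X$ means finite subset; $\mathbf F$ is the set of finite subsets of $\mathbb X$ and $\mathbf F(x)=\{X\Subset\mathbb X\mid x\in X\}$. Fix $W:\mathbf F\to\mathbb C$, $r:\mathbb X\to[0,1)$, $\alpha=\frac r{1-r}$, and write $\alpha^S=\prod_{s\in S}\alpha(s)$. The conditional interaction is $W(X\mid B)=\prod_{C\subset B}W(X\cup C)$ if $X\cap B=\varnothing$, $W(X\mid B)=0$ if $X=\{y\}$ with $y\in B$, and $W(X\mid B)=1$ otherwise. A maximum $\max\{a,\ b_S\mid S\in\mathcal S\}$ denotes the maximum of $a$ together with all $b_S$, $S\in\mathcal S$ (it equals $a$ if $\mathcal S=\varnothing$). *)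

(* Defs.v *)
From HB Require Import structures.
From mathcomp Require Import all_boot all_order all_algebra.
From mathcomp Require Import finmap.
From mathcomp Require Import complex.
From mathcomp Require Import reals.
Set Implicit Arguments. Unset Strict Implicit. Unset Printing Implicit Defensive.
Import Order.TTheory GRing.Theory Num.Theory.
Local Open Scope ring_scope.
Local Open Scope fset_scope.

(* The ambient set \mathbb X is a countable type T (finite or countably infinite);
   finite subsets X ⋐ \mathbb X are elements of {fset T}. *)

Definition cabs (R : realType) (z : R[i]) : R := Normc.normc z.

Definition alpha (T : countType) (R : realType) (r : T -> R) (s : T) : R :=
  r s / (1 - r s).

Definition alphaS (T : countType) (R : realType) (r : T -> R) (S : {fset T}) : R :=
  \prod_(s <- S) alpha r s.

Definition Wcond (T : countType) (R : realType) (W : {fset T} -> R[i])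
    (X B : {fset T}) : R[i] :=
  if X `&` B == fset0 then \prod_(C <- fpowerset B) W (X `|` C)
  else if [exists y : B, X == [fset val y]] then 0
  else 1.

Definition maxQ (T : countType) (R : realType) (r : T -> R) (Z : R[i])
    (U : {fset T}) : R :=
  \big[Num.max/cabs Z]_(S <- fpowerset U | S != fset0)
     (1 + cabs (Z - 1) * alphaS r S)%R.

(* Main.v *)
Require Import Defs.
From HB Require Import structures.
From mathcomp Require Import all_boot all_order all_algebra.
From mathcomp Require Import finmap complex reals ring lra.
Set Implicit Arguments. Unset Strict Implicit.
Import Order.TTheory GRing.Theory Num.Theory.
Local Open Scope ring_scope.


Section H.
Variable R : realType.
Lemma cabsM (a b : R[i]) : cabs (a * b) = cabs a * cabs b.
Proof. exact: Normc.normcM. Qed.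
Lemma cabsD (a b : R[i]) : cabs (a + b) <= cabs a + cabs b.
Proof. exact: (@le_normcD R a b). Qed.
Lemma cabs_ge0 (a : R[i]) : 0 <= cabs a.
Proof. by case: a => a b; rewrite /cabs /Normc.normc sqrtr_ge0. Qed.
Lemma cabs0 : cabs (0 : R[i]) = 0.
Proof. exact: Normc.normc0. Qed.
End H.
Section M.
Variables (T : countType) (R : realType) (r : T -> R).
Hypothesis hr : forall s, 0 <= r s < 1.

Lemma alphaS_ge0 S : 0 <= alphaS r S.
Proof.
rewrite /alphaS; apply: prodr_ge0 => s _.
have /andP[h0 h1] := hr s.
by rewrite /alpha divr_ge0 // subr_ge0 ltW.
Qed.

Lemma bigmax_ge_seq (I : eqType) (s : seq I) (P : pred I) (F : I -> R) (i0 : R) i :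
  i \in s -> P i -> F i <= \big[Num.max/i0]_(j <- s | P j) F j.
Proof.
elim: s => [//|j s IH]; rewrite in_cons big_cons => /orP[/eqP-> ->|/IH H /H].
  by rewrite le_max lexx.
by case: (P j) => // h; rewrite le_max h orbT.
Qed.

Lemma maxQ_ge0 Z U : cabs Z <= maxQ r Z U.
Proof.
rewrite /maxQ; apply: (big_rec (fun m => cabs Z <= m)) => // i m _ h.
by rewrite le_max h orbT.
Qed.

Lemma maxQ_geS Z U S : (S `<=` U)%fset -> S != fset0%fset ->
  1 + cabs (Z - 1) * alphaS r S <= maxQ r Z U.
Proof.
move=> hS hS0; apply: (@bigmax_ge_seq _ _ _ _ _ S) => //.
by rewrite fpowersetE.
Qed.

Lemma maxQ_le Z U M : cabs Z <= M ->
  (forall S, (S `<=` U)%fset -> S != fset0%fset -> 1 + cabs (Z - 1) * alphaS r S <= M) ->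
  maxQ r Z U <= M.
Proof.
move=> h0 h; rewrite /maxQ big_seq_cond.
apply: (big_ind (fun m => m <= M)) => //.
  by move=> a b ha hb; rewrite ge_max ha hb.
by move=> S /andP[]; rewrite fpowersetE; apply: h.
Qed.

Lemma maxQ_mul Z1 Z2 U : maxQ r (Z1 * Z2) U <= maxQ r Z1 U * maxQ r Z2 U.
Proof.
have f1 := maxQ_ge0 Z1 U; have f2 := maxQ_ge0 Z2 U.
have c1 := @cabs_ge0 R Z1; have c2 := @cabs_ge0 R Z2.
apply: maxQ_le.
  by rewrite cabsM ler_pM.
move=> S hS hS0.
have a0 := alphaS_ge0 S.
have p1 := @maxQ_geS Z1 U S hS hS0; have p2 := @maxQ_geS Z2 U S hS hS0.
have e : Z1 * Z2 - 1 = Z1 * (Z2 - 1) + (Z1 - 1) by ring.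
have t := @cabsD R (Z1 * (Z2 - 1)) (Z1 - 1).
rewrite -e cabsM in t.
have d1 := @cabs_ge0 R (Z1 - 1); have d2 := @cabs_ge0 R (Z2 - 1).
set a := alphaS r S in a0 p1 p2 *.
set m1 := maxQ r Z1 U in f1 p1 *. set m2 := maxQ r Z2 U in f2 p2 *.
set x1 := cabs Z1 in c1 f1 t *. set y1 := cabs (Z1 - 1) in d1 p1 t *.
set y2 := cabs (Z2 - 1) in d2 p2 t *. set w := cabs (Z1 * Z2 - 1) in t *.
have h1 : w * a <= (x1 * y2 + y1) * a by exact: (ler_wpM2r a0 t).
have h2 : x1 * (y2 * a) <= m1 * (y2 * a) by apply: ler_wpM2r => //; rewrite mulr_ge0.
have h3 : m1 * (1 + y2 * a) <= m1 * m2 by apply: ler_wpM2l => //; apply: le_trans f1.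
nra.
Qed.
End M.
Section Main.
Variables (T : countType) (R : realType) (r : T -> R).
Hypothesis hr : forall s, 0 <= r s < 1.

Lemma maxQ1 U : maxQ r 1 U <= 1.
Proof.
apply: maxQ_le.
  by rewrite /cabs Normc.normc1.
by move=> S _ _; rewrite subrr /cabs Normc.normc0 mul0r addr0.
Qed.

Lemma maxQ_prod (I : Type) (s : seq I) (P : pred I) (F : I -> R[i]) U :
  maxQ r (\prod_(i <- s | P i) F i) U <= \prod_(i <- s | P i) maxQ r (F i) U.
Proof.
elim: s => [|j s IH]; first by rewrite !big_nil maxQ1.
rewrite !big_cons; case: (P j) => //.
apply: le_trans (maxQ_mul hr _ _ _) _.
apply: ler_wpM2l => //.
exact: le_trans (cabs_ge0 _) (maxQ_ge0 _ _ _).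
Qed.
End Main.

Local Open Scope fset_scope.

Theorem lemma4p6 (T : countType) (R : realType) (W : {fset T} -> R[i])
  (r : T -> R) (hr : forall s, 0 <= r s < 1)
  (x : T) (B Y : {fset T}) (hxB : x \notin B) (hxY : x \in Y)
  (hYB : Y `&` B = fset0) :
  maxQ r (Wcond W Y B) (Y `\ x)
  <= \prod_(X <- fpowerset (Y `|` B) | (x \in X) && (X `\` B == Y))
       maxQ r (W X) (X `\` (x |` B)).
Proof.
have hYB' : forall z, z \in Y -> z \in B = false.
  move/fsetP: hYB => h z zY; have := h z; rewrite !inE zY /=.
  by move=> ->.
have -> : Wcond W Y B = \prod_(X <- fpowerset (Y `|` B)%fset | (x \in X) && (X `\` B == Y)%fset) W X.
  rewrite /Wcond hYB eqxx [RHS]big_fset_condE.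
  have -> : [fset X in fpowerset (Y `|` B)%fset | (x \in X) && (X `\` B == Y)%fset]%fset
      = [fset (Y `|` C)%fset | C in fpowerset B]%fset.
    apply/fsetP => X; apply/idP/idP.
      rewrite !inE fpowersetE => /and3P[hsub hx /eqP hXB].
      apply/imfsetP; exists (X `&` B)%fset; first by rewrite fpowersetE fsubsetIr.
      apply/fsetP => z; rewrite -hXB !inE.
      by case: (z \in B); case: (z \in X).
    case/imfsetP => C; rewrite fpowersetE => hC ->.
    rewrite !inE fpowersetE fsetUS //= hxY /=.
    apply/eqP/fsetP => z; rewrite !inE.
    case zY: (z \in Y) => /=; first by rewrite hYB' .
    case zB: (z \in B) => //=.
    by apply: contraFF zB => /(fsubsetP hC).
  rewrite [RHS]big_imfset //=.
  move=> C1 C2; rewrite !fpowersetE => h1 h2 e; apply/fsetP => z.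
  move/fsetP: e => /(_ z); rewrite !inE.
  case zY: (z \in Y) => //= _.
  have zB := hYB' z zY.
  have n1 : (z \in C1) = false by apply: contraFF zB => /(fsubsetP h1).
  have n2 : (z \in C2) = false by apply: contraFF zB => /(fsubsetP h2).
  by rewrite n1 n2.
rewrite (eq_bigr (fun X => maxQ r (W X) (Y `\ x)%fset)); last first.
  move=> X /andP[_ /eqP hX]; congr maxQ; apply/fsetP => z.
  move/fsetP: hX => /(_ z); rewrite !inE => <-.
  by case: (z == x); case: (z \in B).
exact: maxQ_prod.
Qed.
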